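(* Let $\beta_1=\frac{p_1}{q_1}>1$ and $\beta_2=\frac{p_2}{q_2}>1$ with $\gcd(p_1,q_1)=\gcd(p_2,q_2)=1$, and suppose $p_1=k_1q_2$ and $p_2=k_2q_1$ for some $k_1,k_2\in\mathbb{N}$. Write $p_1=d_1q_1+j_1$ and $p_2=d_2q_2+j_2$ with $d_i\in\mathbb{N}$ and $0\le j_1<q_1$, $0\le j_2<q_2$. Then each of the sets $O_{T_{\beta_1\circ\beta_2}}(1)$, $O_{T_{\beta_2\circ\beta_1}}(1)$, $O_{T_{\beta_1\circ\beta_2}}(\frac{j_1}{q_1})$ and $O_{T_{\beta_2\circ\beta_1}}(\frac{j_2}{q_2})$ is finite.
   Context: For a real number $\gamma>1$ let $T_\gamma:[0,1)\to[0,1)$, $T_\gamma(x)=\gamma x \bmod 1$, and for reals $\gamma_1,\gamma_2>1$ let $T_{\gamma_1\circ\gamma_2}:=T_{\gamma_1}\circ T_{\gamma_2}$. At the point $1$ the map is defined by the left limit, $T_{\gamma_1\circ\gamma_2}(1):=\lim_{x\nearrow1}T_{\gamma_1\circ\gamma_2}(x)$. For a point $x$, $O_{T}(x):=\{T^k(x):k\ge1\}$ denotes its forward orbit under $T$. *)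

(* Defs.v *)
From HB Require Import structures.
From mathcomp Require Import all_boot all_order all_algebra.
From mathcomp Require Import all_classical all_reals all_analysis.
Set Implicit Arguments. Unset Strict Implicit. Unset Printing Implicit Defensive.
Import Order.TTheory GRing.Theory Num.Theory numFieldNormedType.Exports.
Local Open Scope ring_scope.
Local Open Scope classical_set_scope.

Definition fracR {R : realType} (x : R) : R := x - (Num.floor x)%:~R.

Definition Tb {R : realType} (g : R) (x : R) : R := fracR (g * x).

(* T_{g1 o g2} = T_g1 o T_g2, with the value at 1 given by the left limit *)
Definition Tcomp {R : realType} (g1 g2 : R) (x : R) : R :=
  if x == 1 then lim ((Tb g1 \o Tb g2) y @[y --> (1 : R)^'-])
  else Tb g1 (Tb g2 x).

Definition orbit_fwd {R : realType} (T : R -> R) (x : R) : set R :=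
  [set iter k.+1 T x | k in [set: nat]].

(* Main.v *)
Require Import Defs.
From HB Require Import structures.
From mathcomp Require Import all_boot all_order all_algebra.
From mathcomp Require Import all_classical all_reals all_analysis.
From mathcomp Require Import ring lra.
Import Order.TTheory GRing.Theory Num.Theory numFieldNormedType.Exports.
Local Open Scope ring_scope.
Local Open Scope classical_set_scope.

Lemma ceil_pred_lt (R : realType) (v : R) : (Num.ceil v - 1)%:~R < v.
Proof.
by rewrite ltNge -ceil_le_int -ltNge ltrBlDr ltrDl ltr01.
Qed.

Lemma ceil_pred_ge (R : realType) (v : R) : v <= (Num.ceil v - 1)%:~R + 1.
Proof. by rewrite rmorphB /= subrK ceil_ge. Qed.

Lemma fracR_left (R : realType) (a c : R) : 0 < a ->
  \forall y \near (1:R)^'-,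
    fracR (a * y + c) = a * y + c - (Num.ceil (a + c) - 1)%:~R.
Proof.
move=> a0.
set m := Num.ceil (a + c) - 1.
have h1 := @ceil_pred_lt R (a + c); have h2 := @ceil_pred_ge R (a + c).
rewrite -/m in h1 h2.
have e0 : 0 < (a + c - m%:~R) / a by apply: divr_gt0; lra.
near=> y.
have hy : y < 1 by near: y; exact: nbhs_left_lt.
have hy2 : 1 - y < (a + c - m%:~R) / a by near: y; exact: nbhs_left_ltBl.
rewrite /fracR; congr (_ - _); congr (_%:~R).
apply: floor_def; apply/andP; split.
- rewrite ltr_pdivlMr // in hy2. nra.
- rewrite rmorphD /=. nra.
Unshelve. all: by end_near.
Qed.

Lemma lim_left_affine (R : realType) (f : R -> R) (a b : R) :
  (\forall y \near (1:R)^'-, f y = a * y + b) ->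
  lim (f y @[y --> (1:R)^'-]) = a + b.
Proof.
move=> hf; apply: cvg_lim => //.
have hg : {near (1:R)^'-, (fun y => a * y + b) =1 f}.
  by near=> y; apply/esym; near: y.
apply: (cvg_trans (near_eq_cvg hg)).
have -> : a + b = a * 1 + b by rewrite mulr1.
apply: cvg_at_left_filter.
apply: cvgD; last exact: cvg_cst.
apply: cvgMr; exact: cvg_id.
Unshelve. all: by end_near.
Qed.

Definition Sq {R : realType} (q : nat) (x : R) :=
  0 <= x <= 1 /\ exists z : int, q%:R * x = z%:~R.

Lemma Sq_finite (R : realType) (q : nat) : (0 < q)%N ->
  finite_set [set x : R | Sq q x].
Proof.
move=> q0.
apply: (@sub_finite_set _ _ [set (M%:R / q%:R : R) | M in `I_q.+1]); last first.
  exact/finite_image/finite_II.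
move=> x [/andP[x0 x1] [z hz]].
have qR : (0 : R) < q%:R by rewrite ltr0n.
have z0 : 0 <= z.
  by rewrite -(ler0z R) -hz mulr_ge0 // ltW.
have zq : z <= q%:Z.
  by rewrite -(ler_int R) -hz /= ler_piMr // ltW.
case: z z0 zq hz => // M _ Mq hz.
exists M; first by rewrite /= ltnS -(lez_nat). 
have -> : (M%:R : R) = (Posz M)%:~R by [].
by rewrite -hz mulrAC divff ?mul1r // gt_eqF.
Qed.

Lemma fracR_ge0 (R : realType) (t : R) : 0 <= fracR t.
Proof. by rewrite /fracR subr_ge0 floor_le. Qed.
Lemma fracR_lt1 (R : realType) (t : R) : fracR t < 1.
Proof. by rewrite /fracR ltrBlDr addrC -[_ + 1]/(_ + 1%:~R) -rmorphD floorD1_gt. Qed.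

Lemma step (R : realType) (k1 k2 q1 q2 : nat) :
  (0 < q1)%N -> (0 < q2)%N -> (0 < k1)%N -> (0 < k2)%N ->
  forall x : R, Sq q1 x ->
  Sq q1 (Tcomp ((k1 * q2)%:R / q1%:R) ((k2 * q1)%:R / q2%:R) x).
Proof.
move=> q10 q20 k10 k20 x Sx.
set b1 : R := (k1 * q2)%:R / q1%:R.
set b2 : R := (k2 * q1)%:R / q2%:R.
have Q1 : (q1%:R : R) != 0 by rewrite pnatr_eq0 -lt0n.
have Q2 : (q2%:R : R) != 0 by rewrite pnatr_eq0 -lt0n.
have hb : b1 * b2 = (k1 * k2)%:R.
  by rewrite /b1 /b2 !natrM; field; rewrite Q1 Q2.
have hqb : q1%:R * b1 = (k1 * q2)%:R.
  by rewrite /b1 !natrM; field.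
have b2p : 0 < b2 by apply: divr_gt0; rewrite ltr0n ?muln_gt0 ?k20.
have bbp : 0 < b1 * b2 by rewrite hb ltr0n muln_gt0 k10 k20.
rewrite /Tcomp; case: eqP => [_|x1].
  set n := Num.ceil (b2 + 0) - 1.
  set m := Num.ceil (b1 * b2 + - (b1 * n%:~R)) - 1.
  have H : \forall y \near (1:R)^'-,
      (Tb b1 \o Tb b2) y = (b1 * b2) * y + (- (b1 * n%:~R) - m%:~R).
    near=> y.
    have E1 : fracR (b2 * y) = b2 * y - n%:~R.
      near: y; move: (@fracR_left R _ 0 b2p); apply: filterS => y.
      by rewrite [b2 * y + 0]addr0 => ->.
    have E2 : fracR ((b1 * b2) * y + - (b1 * n%:~R)) =
        (b1 * b2) * y + - (b1 * n%:~R) - m%:~R.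
      by near: y; exact: (@fracR_left R _ (- (b1 * n%:~R)) bbp).
    rewrite /= /Tb E1.
    have -> : b1 * (b2 * y - n%:~R) = (b1 * b2) * y + - (b1 * n%:~R) by ring.
    by rewrite E2; ring.
  rewrite (@lim_left_affine R _ _ _ H).
  have h1 : m%:~R < b1 * b2 + - (b1 * n%:~R) := @ceil_pred_lt R _.
  have h2 : b1 * b2 + - (b1 * n%:~R) <= m%:~R + 1 := @ceil_pred_ge R _.
  split; first by apply/andP; split; lra.
  exists ((k1 * k2 * q1)%:Z - (k1 * q2)%:Z * n - q1%:Z * m).
  clearbody m n.
  have nz : forall k : nat, ((k : int)%:~R : R) = k%:R by [].
  rewrite !rmorphB !rmorphM /= !nz.
  rewrite /b1 /b2 !natrM; field; by rewrite Q1 Q2.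
case: Sx => _ [z hz].
split.
  by apply/andP; split; [exact: fracR_ge0 | exact/ltW/fracR_lt1].
exists ((k1 * k2)%:Z * z - (k1 * q2)%:Z * Num.floor (b2 * x)
        - q1%:Z * Num.floor (b1 * fracR (b2 * x))).
rewrite /Tb {1}/fracR {1}/fracR.
have nz : forall k : nat, ((k : int)%:~R : R) = k%:R by [].
rewrite !rmorphB !rmorphM /= !nz -hz.
rewrite /b1 /b2 !natrM; field; by rewrite Q1 Q2.
Unshelve. all: by end_near.
Qed.

Lemma orbit_gen (R : realType) (k1 k2 q1 q2 : nat) :
  (0 < q1)%N -> (0 < q2)%N -> (0 < k1)%N -> (0 < k2)%N ->
  forall x0 : R, Sq q1 x0 ->
  finite_set (orbit_fwd (Tcomp ((k1 * q2)%:R / q1%:R) ((k2 * q1)%:R / q2%:R)) x0).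
Proof.
move=> q10 q20 k10 k20 x0 S0.
apply: (sub_finite_set _ (@Sq_finite R q1 q10)).
have HI : forall k, Sq q1 (iter k (Tcomp ((k1 * q2)%:R / q1%:R)
                                  ((k2 * q1)%:R / q2%:R)) x0).
  elim=> [//|k IH] /=; exact: step.
by move=> _ [k _ <-]; exact: HI.
Qed.

Theorem lemma4p2 (R : realType) (p1 q1 p2 q2 k1 k2 d1 j1 d2 j2 : nat) :
  (0 < q1)%N -> (0 < q2)%N ->
  (q1 < p1)%N -> (q2 < p2)%N ->
  coprime p1 q1 -> coprime p2 q2 ->
  p1 = (k1 * q2)%N -> p2 = (k2 * q1)%N ->
  p1 = (d1 * q1 + j1)%N -> (j1 < q1)%N ->
  p2 = (d2 * q2 + j2)%N -> (j2 < q2)%N ->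
  let b1 : R := p1%:R / q1%:R in
  let b2 : R := p2%:R / q2%:R in
  [/\ finite_set (orbit_fwd (Tcomp b1 b2) 1),
      finite_set (orbit_fwd (Tcomp b2 b1) 1),
      finite_set (orbit_fwd (Tcomp b1 b2) (j1%:R / q1%:R)) &
      finite_set (orbit_fwd (Tcomp b2 b1) (j2%:R / q2%:R))].
Proof.
move=> q10 q20 qp1 qp2 _ _ e1 e2 _ j1q _ j2q b1 b2.
have k10 : (0 < k1)%N by move: qp1; rewrite e1 lt0n; apply: contraTneq => ->.
have k20 : (0 < k2)%N by move: qp2; rewrite e2 lt0n; apply: contraTneq => ->.
have S1 : forall q : nat, (0 < q)%N -> Sq q (1 : R).
  move=> q q0; split; first by rewrite ler01 lexx.
  by exists q; rewrite mulr1.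
have S2 : forall q j : nat, (0 < q)%N -> (j < q)%N -> Sq q (j%:R / q%:R : R).
  move=> q j q0 jq.
  have qR : (0 : R) < q%:R by rewrite ltr0n.
  split.
    apply/andP; split; first by rewrite divr_ge0.
    by rewrite ler_pdivrMr // mul1r ler_nat ltnW.
  by exists j; rewrite mulrC mulfVK // gt_eqF.
rewrite /b1 /b2 e1 e2; split.
- exact: orbit_gen (S1 _ q10).
- exact: orbit_gen (S1 _ q20).
- exact: orbit_gen (S2 _ _ q10 j1q).
- exact: orbit_gen (S2 _ _ q20 j2q).
Qed.
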